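(* Let $M$ be a smooth manifold with a symmetric (torsion-free) affine connection $\nabla$ and Riemann tensor $R_{abc}{}^d$. Then for all indices $$\nabla_{(a}\nabla_bR_{cd)e}{}^f = R_{(abc}{}^m R_{d)me}{}^f - R_{ace}{}^m R_{bdm}{}^f + R_{acm}{}^f R_{bde}{}^m .$$
   Context: Abstract index notation with Einstein summation is used. The connection has Christoffel symbols $\Gamma^c_{ab}=\Gamma^c_{ba}$, and the Riemann tensor is $R_{abc}{}^d = \partial_a \Gamma_{bc}^d - \partial_b\Gamma_{ac}^d - \Gamma_{ac}^k\Gamma_{bk}^d + \Gamma_{ak}^d \Gamma_{bc}^k$. The notation $(abcd)$ on a group of indices denotes the sum over the four cyclic permutations of $(a,b,c,d)$: e.g. $\nabla_{(a}\nabla_bR_{cd)e}{}^f=\nabla_a\nabla_bR_{cde}{}^f+\nabla_b\nabla_cR_{dae}{}^f+\nabla_c\nabla_dR_{abe}{}^f+\nabla_d\nabla_aR_{bce}{}^f$ and $R_{(abc}{}^m R_{d)me}{}^f = R_{abc}{}^m R_{dme}{}^f+R_{bcd}{}^m R_{ame}{}^f+R_{cda}{}^m R_{bme}{}^f+R_{dab}{}^m R_{cme}{}^f$. *)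

(* Defs.v *)
(* Coordinate (local chart) formalization: the ring [R] plays
   the role of smooth functions on a coordinate chart of M, and [D i] is the
   coordinate derivation d/dx^i. *)
From HB Require Import structures.
From mathcomp Require Import all_boot all_order all_algebra.
Set Implicit Arguments. Unset Strict Implicit. Unset Printing Implicit Defensive.
Import Order.TTheory GRing.Theory Num.Theory.
Local Open Scope ring_scope.

Section Tensors.
Variables (R : comNzRingType) (n : nat).
Variable D : 'I_n -> R -> R.
(* G a b c = Gamma^c_{ab} *)
Variable G : 'I_n -> 'I_n -> 'I_n -> R.

(* A family of coordinate derivations: additive, Leibniz, pairwise commuting
   (coordinate vector fields commute). *)
Definition coord_derivations : Prop :=
  [/\ forall i x y, D i (x + y) = D i x + D i y,
      forall i x y, D i (x * y) = D i x * y + x * D i y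
    & forall i j x, D i (D j x) = D j (D i x)].

Definition symmetric_connection : Prop :=
  forall a b c, G a b c = G b a c.

Definition Riem (a b c d : 'I_n) : R :=
  D a (G b c d) - D b (G a c d)
  - \sum_(k < n) G a c k * G b k d + \sum_(k < n) G a k d * G b c k.

Definition nablaRiem (x a b c d : 'I_n) : R :=
  D x (Riem a b c d)
  - \sum_(k < n) G x a k * Riem k b c d
  - \sum_(k < n) G x b k * Riem a k c d
  - \sum_(k < n) G x c k * Riem a b k d
  + \sum_(k < n) G x k d * Riem a b c k.

Definition nabla2Riem (y x a b c d : 'I_n) : R :=
  D y (nablaRiem x a b c d)
  - \sum_(k < n) G y x k * nablaRiem k a b c d
  - \sum_(k < n) G y a k * nablaRiem x k b c d
  - \sum_(k < n) G y b k * nablaRiem x a k c d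
  - \sum_(k < n) G y c k * nablaRiem x a b k d
  + \sum_(k < n) G y k d * nablaRiem x a b c k.
End Tensors.

(* Main.v *)
Require Import Defs.
From HB Require Import structures.
From mathcomp Require Import all_boot all_order all_algebra.
From Stdlib Require Import Ring.
Import GRing.Theory.

Module AbsM.
Set Implicit Arguments. Unset Strict Implicit.
Section Abs.
Variable A : Type.
Variables (z o : A) (ad mu : A -> A -> A) (op : A -> A).
Hypothesis Rth : ring_theory z o ad mu (fun x y => ad x (op y)) op eq.
Add Ring AR : Rth.
Declare Scope A_scope.
Local Infix "+" := ad : A_scope.
Local Infix "*" := mu : A_scope.
Local Notation "- x" := (op x) : A_scope.
Local Notation "x - y" := (ad x (op y)) : A_scope.
Local Notation "0" := z : A_scope.
Local Open Scope A_scope.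
Variable n : nat.
Local Notation I := ('I_n).
Variable sum : (I -> A) -> A.
Hypothesis sum_add : forall F G, sum (fun k => F k + G k) = sum F + sum G.
Hypothesis sum_mull : forall c F, sum (fun k => c * F k) = c * sum F.
Hypothesis sum_ext : forall F G, (forall k, F k = G k) -> sum F = sum G.
Hypothesis sum_swap : forall F : I -> I -> A, sum (fun k => sum (fun l => F k l)) = sum (fun l => sum (fun k => F k l)).

Lemma sum_zero : sum (fun _ => 0) = 0.
Proof.
rewrite (@sum_ext (fun _ => 0) (fun _ => 0 * 0)); last by move=> _; ring.
rewrite (sum_mull 0 (fun _ => 0)). ring.
Qed.
Lemma sum_opp F : sum (fun k => - F k) = - sum F.
Proof.
rewrite -(@sum_ext (fun k => (- o) * F k)); last by move=> k; ring.
rewrite sum_mull. ring.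
Qed.
Lemma sum_mulr c F : sum (fun k => F k * c) = sum F * c.
Proof.
rewrite -(@sum_ext (fun k => c * F k)); last by move=> k; ring.
rewrite sum_mull. ring.
Qed.

Variable D : I -> A -> A.
Hypothesis D_add : forall i x y, D i (x + y) = D i x + D i y.
Hypothesis D_mul : forall i x y, D i (x * y) = D i x * y + x * D i y.
Hypothesis D_comm : forall i j x, D i (D j x) = D j (D i x).
Hypothesis D_sum : forall i F, D i (sum F) = sum (fun k => D i (F k)).
Lemma D_zero i : D i 0 = 0.
Proof. have := D_add i 0 0. have -> : 0 + 0 = 0 by ring. move=> h.
have : D i 0 + D i 0 - D i 0 = D i 0 - D i 0 by rewrite -h.
move=> h2. transitivity (D i 0 + D i 0 - D i 0); first by ring. rewrite h2; ring. Qed.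
Lemma D_opp i x : D i (- x) = - D i x.
Proof. have := D_add i x (- x). have -> : x + - x = 0 by ring. rewrite D_zero => h.
transitivity (D i (- x) + (D i x - D i x)); first by ring.
have -> : D i (- x) + (D i x - D i x) = (D i x + D i (- x)) - D i x by ring. rewrite -h; ring. Qed.

Variable G : I -> I -> I -> A.
Hypothesis hG : forall a b c, G a b c = G b a c.

Definition N c F1 (F2 : I -> I -> A) := c + sum F1 + sum (fun k => sum (F2 k)).

Lemma r1_atom t : t = t + sum (fun _ => 0).
Proof. rewrite sum_zero; ring. Qed.
Lemma r1_sum F : sum F = 0 + sum F.
Proof. ring. Qed.
Lemma r1_add x y cx cy Fx Fy : x = cx + sum Fx -> y = cy + sum Fy ->
  x + y = (cx + cy) + sum (fun k => Fx k + Fy k).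
Proof. move=> -> ->; rewrite sum_add; ring. Qed.
Lemma r1_opp x cx Fx : x = cx + sum Fx -> - x = - cx + sum (fun k => - Fx k).
Proof. move=> ->; rewrite sum_opp; ring. Qed.
Lemma r1_mull x y cy Fy : y = cy + sum Fy -> x * y = x * cy + sum (fun k => x * Fy k).
Proof. move=> ->; rewrite sum_mull; ring. Qed.
Lemma r1_mulr y x cx Fx : x = cx + sum Fx -> x * y = cx * y + sum (fun k => Fx k * y).
Proof. move=> ->; rewrite sum_mulr; ring. Qed.
Lemma r1_D i x cx Fx : x = cx + sum Fx -> D i x = D i cx + sum (fun k => D i (Fx k)).
Proof. move=> ->; rewrite D_add D_sum; ring. Qed.

Lemma sum2_add (F F' : I -> I -> A) : sum (fun k => sum (fun l => F k l + F' k l)) =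
  sum (fun k => sum (F k)) + sum (fun k => sum (F' k)).
Proof. rewrite -sum_add; apply: sum_ext => k; exact: sum_add. Qed.

Lemma r2_atom t : t = N t (fun _ => 0) (fun _ _ => 0).
Proof. rewrite /N (@sum_ext (fun k => sum (fun _ => 0)) (fun _ => 0)) ?sum_zero //; ring. Qed.
Lemma r2_sum F c F1 : (forall k, F k = c k + sum (F1 k)) ->
  sum F = N 0 c F1.
Proof. move=> h; rewrite /N (sum_ext h) sum_add; ring. Qed.
Lemma r2_add x y cx cy Fx Fy Hx Hy : x = N cx Fx Hx -> y = N cy Fy Hy ->
  x + y = N (cx + cy) (fun k => Fx k + Fy k) (fun k l => Hx k l + Hy k l).
Proof. move=> -> ->; rewrite /N sum_add sum2_add; ring. Qed.
Lemma r2_opp x cx Fx Hx : x = N cx Fx Hx -> - x = N (- cx) (fun k => - Fx k) (fun k l => - Hx k l).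
Proof. move=> ->; rewrite /N sum_opp (@sum_ext (fun k => sum (fun l => - Hx k l)) (fun k => - sum (Hx k))).
  by rewrite sum_opp; ring. by move=> k; rewrite sum_opp. Qed.
Lemma r2_mull x y cy Fy Hy : y = N cy Fy Hy -> x * y = N (x * cy) (fun k => x * Fy k) (fun k l => x * Hy k l).
Proof. move=> ->; rewrite /N sum_mull (@sum_ext (fun k => sum (fun l => x * Hy k l)) (fun k => x * sum (Hy k))).
  by rewrite sum_mull; ring. by move=> k; rewrite sum_mull. Qed.
Lemma r2_mulr y x cx Fx Hx : x = N cx Fx Hx -> x * y = N (cx * y) (fun k => Fx k * y) (fun k l => Hx k l * y).
Proof. move=> ->; rewrite /N sum_mulr (@sum_ext (fun k => sum (fun l => Hx k l * y)) (fun k => sum (Hx k) * y)).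
  by rewrite sum_mulr; ring. by move=> k; rewrite sum_mulr. Qed.
Lemma r2_D i x cx Fx Hx : x = N cx Fx Hx -> D i x = N (D i cx) (fun k => D i (Fx k)) (fun k l => D i (Hx k l)).
Proof. move=> ->; rewrite /N !D_add !D_sum (@sum_ext (fun k => D i (sum (Hx k))) (fun k => sum (fun l => D i (Hx k l)))) //.
Qed.

Lemma closeN x y cx cy Fx Fy Hx Hy (H : I -> I -> A) : x = N cx Fx Hx -> y = N cy Fy Hy ->
  cx = cy -> (forall k, Fx k = Fy k) -> (forall k l, Hx k l + H l k = Hy k l + H k l) -> x = y.
Proof.
move=> -> -> -> e1 e2; rewrite /N (sum_ext e1).
have : sum (fun k => sum (fun l => Hx k l + H l k)) = sum (fun k => sum (fun l => Hy k l + H k l)).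
  by apply: sum_ext => k; apply: sum_ext => l; apply: e2.
rewrite !sum2_add (sum_swap H) => h.
transitivity (cy + sum Fy + (sum (fun k => sum (Hx k)) + sum (fun k => sum (fun l => H l k))) - sum (fun k => sum (fun l => H l k))); first by ring.
rewrite h; ring.
Qed.

Ltac hs t := lazymatch t with context [sum _] => constr:(true) | _ => constr:(false) end.

Ltac reif1 t :=
  lazymatch hs t with
  | false => constr:(r1_atom t)
  | true =>
  lazymatch t with
  | ad ?x ?y => let px := reif1 x in let py := reif1 y in constr:(r1_add px py)
  | op ?x => let px := reif1 x in constr:(r1_opp px)
  | mu ?x ?y => lazymatch hs x with
                | true => lazymatch hs y with
                          | false => let px := reif1 x in constr:(r1_mulr y px)
                          end
                | false => let py := reif1 y in constr:(r1_mull x py)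
                end
  | D ?i ?x => let px := reif1 x in constr:(r1_D i px)
  | sum ?F => constr:(r1_sum F)
  end end.

Ltac reif2 t :=
  lazymatch hs t with
  | false => constr:(r2_atom t)
  | true =>
  lazymatch t with
  | ad ?x ?y => let px := reif2 x in let py := reif2 y in constr:(r2_add px py)
  | op ?x => let px := reif2 x in constr:(r2_opp px)
  | mu ?x ?y => lazymatch hs x with
                | true => lazymatch hs y with
                          | false => let px := reif2 x in constr:(r2_mulr y px)
                          end
                | false => let py := reif2 y in constr:(r2_mull x py)
                end
  | D ?i ?x => let px := reif2 x in constr:(r2_D i px)
  | sum ?F => let p := constr:(fun k : I => ltac:(let b := eval cbv beta in (F k) in
                                                 let q := reif1 b in exact q)) in
              constr:(r2_sum p)
  end end.

Ltac pushD := repeat progress rewrite ?D_add ?D_mul ?D_opp ?D_zero.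
Ltac canonG := repeat match goal with |- context [G ?x ?y ?z] =>
   tryif constr_eq x y then fail else
   match goal with |- context [G y x z] => rewrite (hG x y z) end end.
Ltac canonD := repeat match goal with |- context [D ?x (D ?y ?t)] =>
   tryif constr_eq x y then fail else
   match goal with |- context [D y (D x t)] => rewrite (D_comm x y t) end end.
Ltac fin := intros; cbv beta; pushD; canonG; canonD; ring.
Ltac sumeqH H := lazymatch goal with |- ?L = ?R =>
   let pL := reif2 L in let pR := reif2 R in apply: (@closeN _ _ _ _ _ _ _ _ H pL pR) end.
Ltac sumeq := sumeqH (fun _ _ : I => 0).

Definition Riem (a b c d : I) : A :=
  D a (G b c d) - D b (G a c d)
  - sum (fun k => G a c k * G b k d) + sum (fun k => G a k d * G b c k).

Lemma RiemA a b c d : Riem a b c d = - Riem b a c d.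
Proof. rewrite /Riem. sumeq; fin. Qed.
Lemma RiemB a b c d : Riem a b c d + Riem b c a d + Riem c a b d = 0.
Proof. rewrite /Riem. sumeq; fin. Qed.


Lemma RiemB' a b c d : Riem a c b d = Riem a b c d + Riem b c a d.
Proof. have h := RiemB a b c d. rewrite (RiemA a c b d).
transitivity (- (Riem a b c d + Riem b c a d + Riem c a b d) + Riem a b c d + Riem b c a d); first by ring.
rewrite h; ring. Qed.

Definition nR (x a b c d : I) : A :=
  D x (Riem a b c d)
  - sum (fun k => G x a k * Riem k b c d)
  - sum (fun k => G x b k * Riem a k c d)
  - sum (fun k => G x c k * Riem a b k d)
  + sum (fun k => G x k d * Riem a b c k).

Lemma bianchi2 x a b c d : nR x a b c d + nR a b x c d + nR b x a c d = 0.
Proof. rewrite /nR /Riem.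
sumeqH (fun k l => G b l d * G x c k * G a k l - G b l d * G a c k * G x k l + G b c l * G x k d * G a l k - G b c l * G a k d * G x l k - G a c l * G x k d * G b l k - G a l d * G x c k * G b k l); fin.
Qed.

Definition N3 (T : I -> I -> I -> I -> A) (x a b c d : I) : A :=
  D x (T a b c d)
  - sum (fun k => G x a k * T k b c d)
  - sum (fun k => G x b k * T a k c d)
  - sum (fun k => G x c k * T a b k d)
  + sum (fun k => G x k d * T a b c k).
Definition N4 (U : I -> I -> I -> I -> I -> A) (y x a b c d : I) : A :=
  D y (U x a b c d)
  - sum (fun k => G y x k * U k a b c d)
  - sum (fun k => G y a k * U x k b c d)
  - sum (fun k => G y b k * U x a k c d)
  - sum (fun k => G y c k * U x a b k d)
  + sum (fun k => G y k d * U x a b c k).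

Lemma ricci T a b c d e f : N4 (N3 T) a b c d e f - N4 (N3 T) b a c d e f =
  - sum (fun m => Riem a b c m * T m d e f) - sum (fun m => Riem a b d m * T c m e f)
  - sum (fun m => Riem a b e m * T c d m f) + sum (fun m => Riem a b m f * T c d e m).
Proof. rewrite /N4 /N3 /Riem.
sumeqH (fun k l => (G a c k * G b k l * T l d e f) - (G a k l * G b c k * T l d e f) + (G a d k * G b k l * T c l e f) - (G a k l * G b d k * T c l e f) + (G a e k * G b k l * T c d l f) - (G a k l * G b e k * T c d l f) + (G a k f * G b l k * T c d e l) - (G a l k * G b k f * T c d e l) + (G a c k * G b d l * T k l e f) + (G a c k * G b e l * T k d l f) - (G a c k * G b l f * T k d e l) + (G a e k * G b d l * T c l k f) - (G a k f * G b d l * T c l e k) - (G a d l * G b c k * T k l e f) + (G a d k * G b e l * T c k l f) - (G a k f * G b e l * T c d l k) - (G a e l * G b c k * T k d l f) - (G a d k * G b l f * T c k e l) - (G a e k * G b l f * T c d k l) + (G a l f * G b c k * T k d e l)); fin.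
Qed.

Lemma nRA x a b c d : nR x a b c d = - nR x b a c d.
Proof. rewrite /nR /Riem. sumeq; fin. Qed.

Lemma N4_anti (U : I -> I -> I -> I -> I -> A) y x a b c d :
  (forall x a b c d, U x a b c d = - U x b a c d) ->
  N4 U y x a b c d = - N4 U y x b a c d.
Proof. move=> hU. rewrite /N4. sumeq.
 - rewrite (hU x b a); fin.
 - intros; cbv beta. rewrite (hU k b a) (hU x b k) (hU x k a) (hU x b a k d) (hU x b a c k). fin.
 - fin.
Qed.

Lemma N4_cyc (U : I -> I -> I -> I -> I -> A) y x a b c d :
  (forall x a b c d, U x a b c d + U a b x c d + U b x a c d = 0) ->
  N4 U y x a b c d + N4 U y a b x c d + N4 U y b x a c d = 0.
Proof. move=> hU.
have h : forall x a b c d, U x a b c d = - U a b x c d - U b x a c d.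
  move=> x0 a0 b0 c0 d0; have := hU x0 a0 b0 c0 d0 => e.
  transitivity (U x0 a0 b0 c0 d0 + U a0 b0 x0 c0 d0 + U b0 x0 a0 c0 d0 - U a0 b0 x0 c0 d0 - U b0 x0 a0 c0 d0); first by ring.
  rewrite e; ring.
rewrite /N4. sumeq.
 - rewrite (h x a b c d); fin.
 - intros; cbv beta. rewrite (h k a b c d) (h x k b c d) (h x a k c d) (h x a b k d) (h x a b c k). fin.
 - fin.
Qed.

Lemma mainAbs a b c d e f :
  N4 (N3 Riem) a b c d e f + N4 (N3 Riem) b c d a e f
  + N4 (N3 Riem) c d a b e f + N4 (N3 Riem) d a b c e f
  = sum (fun m => Riem a b c m * Riem d m e f + Riem b c d m * Riem a m e f
                  + Riem c d a m * Riem b m e f + Riem d a b m * Riem c m e f)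
    - sum (fun m => Riem a c e m * Riem b d m f)
    + sum (fun m => Riem a c m f * Riem b d e m).
Proof.
have nRE : forall x a b c d, N3 Riem x a b c d = - N3 Riem x b a c d by exact: nRA.
have nRB : forall x a b c d, N3 Riem x a b c d + N3 Riem a b x c d + N3 Riem b x a c d = 0 by exact: bianchi2.
have A1 : N4 (N3 Riem) a c b d e f + N4 (N3 Riem) a c d b e f = 0.
  rewrite (N4_anti a c b d e f nRE); ring.
have B1 : N4 (N3 Riem) a b c d e f + N4 (N3 Riem) a c d b e f + N4 (N3 Riem) a d b c e f = 0 by exact: N4_cyc.
have B2 : N4 (N3 Riem) c a b d e f + N4 (N3 Riem) c b d a e f + N4 (N3 Riem) c d a b e f = 0 by exact: N4_cyc.
transitivity ((N4 (N3 Riem) a c b d e f - N4 (N3 Riem) c a b d e f) - (N4 (N3 Riem) a d b c e f - N4 (N3 Riem) d a b c e f) + (N4 (N3 Riem) b c d a e f - N4 (N3 Riem) c b d a e f) + (N4 (N3 Riem) a b c d e f + N4 (N3 Riem) a c d b e f + N4 (N3 Riem) a d b c e f) - (N4 (N3 Riem) a c b d e f + N4 (N3 Riem) a c d b e f) + (N4 (N3 Riem) c a b d e f + N4 (N3 Riem) c b d a e f + N4 (N3 Riem) c d a b e f)); first by ring.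
rewrite A1 B1 B2 !ricci.
sumeq.
 - fin.
 - intros; cbv beta.
   rewrite (RiemA k d e f) (RiemA k c e f) (RiemA k a e f) (RiemA d a e k) (RiemA d a k f) (RiemA a d b k).
   rewrite (RiemB' a b c k) (RiemB' a c d k). ring.
 - fin.
Qed.
End Abs.
End AbsM.

Local Open Scope ring_scope.

Theorem mainTheorem1 (R : comNzRingType) (n : nat) (D : 'I_n -> R -> R)
    (G : 'I_n -> 'I_n -> 'I_n -> R)
    (hD : coord_derivations D) (hG : symmetric_connection G)
    (a b c d e f : 'I_n) :
  nabla2Riem D G a b c d e f + nabla2Riem D G b c d a e f
  + nabla2Riem D G c d a b e f + nabla2Riem D G d a b c e f
  = \sum_(m < n) (Riem D G a b c m * Riem D G d m e f
                  + Riem D G b c d m * Riem D G a m e f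
                  + Riem D G c d a m * Riem D G b m e f
                  + Riem D G d a b m * Riem D G c m e f)
    - \sum_(m < n) Riem D G a c e m * Riem D G b d m f
    + \sum_(m < n) Riem D G a c m f * Riem D G b d e m.
Proof.
case: hD => Dadd Dmul Dcomm.
have Rth : @ring_theory R 0 1 +%R *%R (fun x y => x - y) (fun x => - x) eq.
  split; [exact: add0r|exact: addrC|exact: addrA|exact: mul1r|exact: mulrC|exact: mulrA|exact: mulrDl|by []|exact: subrr].
have D0 : forall i, D i 0 = 0.
  move=> i; have := Dadd i 0 0; rewrite addr0 => h.
  by apply: (addrI (D i 0)); rewrite addr0 -h.
have Dsum : forall i (F : 'I_n -> R), D i (\sum_(k < n) F k) = \sum_(k < n) D i (F k).
  move=> i F; exact: (big_morph (D i) (Dadd i) (D0 i)).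
have s_add : forall F G : 'I_n -> R, \sum_(k < n) (F k + G k) = \sum_(k < n) F k + \sum_(k < n) G k.
  move=> F G'; exact: big_split.
have s_mull : forall (c : R) (F : 'I_n -> R), \sum_(k < n) (c * F k) = c * \sum_(k < n) F k.
  move=> c0 F; by rewrite mulr_sumr.
have s_ext : forall F G : 'I_n -> R, (forall k, F k = G k) -> \sum_(k < n) F k = \sum_(k < n) G k.
  move=> F G' h; exact: eq_bigr.
have s_swap : forall F : 'I_n -> 'I_n -> R,
    \sum_(k < n) \sum_(l < n) F k l = \sum_(l < n) \sum_(k < n) F k l.
  move=> F; exact: exchange_big.
exact: (@AbsM.mainAbs R 0 1 +%R *%R (fun x => - x) Rth n (fun F => \sum_(k < n) F k)
          s_add s_mull s_ext s_swap D Dadd Dmul Dcomm Dsum G hG a b c d e f).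
Qed.
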